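(* Let $\delta:\,]0,+\infty[\to\mathbb R$ be nonnegative, bounded and continuously differentiable, and consider $\ddot r+\delta(r)\dot r=-1/r^2$, $r>0$. If $r_1\not\equiv r_2$ are two solutions and $r_1(t_* )=r_2(t_* )$ for some $t_*$, then $r_1(t)\neq r_2(t)$ for every $t\neq t_*$ in the common interval of definition of $r_1$ and $r_2$. *)

(* Defs.v *)
From Stdlib Require Import Reals.
From Coquelicot Require Import Coquelicot.
Open Scope R_scope.

Definition in_open_interval (a b : Rbar) (t : R) : Prop :=
  Rbar_lt a (Finite t) /\ Rbar_lt (Finite t) b.

Definition admissible_delta (delta : R -> R) : Prop :=
  (forall x, 0 < x -> 0 <= delta x) /\
  (exists M, forall x, 0 < x -> Rabs (delta x) <= M) /\
  (forall x, 0 < x -> ex_derive delta x /\ continuous (Derive delta) x).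

Definition is_solution (delta : R -> R) (a b : Rbar) (r : R -> R) : Prop :=
  forall t, in_open_interval a b t ->
    0 < r t /\
    ex_derive r t /\
    ex_derive (Derive r) t /\
    Derive (Derive r) t + delta (r t) * Derive r t = - / (r t ^ 2).

(* Main.v *)
Require Import Defs.
From Stdlib Require Import Reals Lra.
From Coquelicot Require Import Coquelicot.
Open Scope R_scope.

Lemma first_zero (p : R -> R) (x y : R) :
  x < y -> (forall s, x <= s <= y -> continuity_pt p s) ->
  p x > 0 -> p y <= 0 ->
  exists z, x < z <= y /\ p z = 0 /\ forall w, x <= w < z -> p w > 0.
Proof.
  intros Hxy Hc Hx Hy.
  set (E := fun s => x <= s <= y /\ forall w, x <= w <= s -> p w > 0).
  assert (Hb : bound E). { exists y. intros s [Hs _]. lra. }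
  assert (He : exists s, E s).
  { exists x. split. lra. intros w Hw. replace w with x by lra. exact Hx. }
  destruct (completeness E Hb He) as [z [Hub Hlub]].
  assert (Hxz : x <= z). { apply Hub. destruct He as [s Hs]. split. lra.
    intros w Hw; replace w with x by lra; exact Hx. }
  assert (Hzy : z <= y). { apply Hlub. intros s [Hs _]. lra. }
  assert (HA : forall w, x <= w < z -> p w > 0).
  { intros w Hw. destruct (Rle_or_lt (p w) 0) as [Hpw|Hpw]; [|exact Hpw].
    exfalso. assert (z <= w); [|lra]. apply Hlub. intros s [Hs1 Hs2].
    destruct (Rle_or_lt s w) as [|Hsw]; [lra|].
    specialize (Hs2 w ltac:(lra)). lra. }
  assert (Hcz := Hc z ltac:(lra)).
  assert (Hpz : p z = 0).
  { destruct (Rtotal_order (p z) 0) as [Hn|[H0|Hp]]; [|exact H0|].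
    - exfalso. destruct (Hcz (- p z) ltac:(lra)) as [alp [Halp Hal]].
      assert (Hxz' : x < z). { destruct (Req_dec x z); [subst; lra|lra]. }
      set (w := Rmax (z - alp/2) x).
      assert (Hw1 : x <= w < z). { unfold w; apply Rmax_case_strong; lra. }
      assert (Hw2 : p w > 0) by (apply HA; exact Hw1).
      assert (Hd : R_dist (p w) (p z) < - p z).
      { apply Hal. split. split. exact I. lra.
        unfold R_dist, dist; simpl; unfold R_dist. rewrite Rabs_left; [|lra]. revert Hw1; unfold w; apply Rmax_case_strong; lra. }
      unfold R_dist in Hd. apply Rabs_def2 in Hd. lra.
    - exfalso. destruct (Hcz (p z) ltac:(lra)) as [alp [Halp Hal]].
      assert (Hzy' : z < y). { destruct (Req_dec z y); [subst; lra|lra]. }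
      set (s := Rmin (z + alp/2) y).
      assert (Hs : E s).
      { split. unfold s; apply Rmin_case_strong; lra.
        intros w Hw. destruct (Rtotal_order w z) as [Hwz|[Hwz|Hwz]].
        + apply HA; lra.
        + subst w; exact Hp.
        + assert (Hd : R_dist (p w) (p z) < p z).
          { apply Hal. split. split. exact I. lra.
            unfold R_dist, dist; simpl; unfold R_dist. rewrite Rabs_right; [|lra].
            revert Hw; unfold s; apply Rmin_case_strong; lra. }
          unfold R_dist in Hd. apply Rabs_def2 in Hd. lra. }
      assert (s <= z) by (apply Hub; exact Hs).
      revert H; unfold s; apply Rmin_case_strong; lra. }
  exists z. split; [|split; [exact Hpz|exact HA]].
  split; [|exact Hzy]. destruct (Req_dec x z); [subst; lra|lra].
Qed.

Lemma deriv_pos_right (p : R -> R) (s l : R) :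
  derivable_pt_lim p s l -> l > 0 -> p s = 0 ->
  exists d, d > 0 /\ forall h, 0 < h < d -> p (s + h) > 0.
Proof.
  intros Hd Hl Hs. destruct (Hd (l/2) ltac:(lra)) as [del Hdel].
  exists del. split. apply cond_pos. intros h Hh.
  assert (H := Hdel h ltac:(lra) ltac:(rewrite Rabs_right; lra)).
  rewrite Hs in H. apply Rabs_def2 in H.
  assert (E : p (s + h) = (p (s + h) - 0) / h * h) by (field; lra).
  rewrite E. apply Rmult_lt_0_compat; lra.
Qed.

Lemma deriv_pos_left (p : R -> R) (s l : R) :
  derivable_pt_lim p s l -> l > 0 -> p s = 0 ->
  exists d, d > 0 /\ forall h, 0 < h < d -> p (s - h) < 0.
Proof.
  intros Hd Hl Hs. destruct (Hd (l/2) ltac:(lra)) as [del Hdel].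
  exists del. split. apply cond_pos. intros h Hh.
  assert (H := Hdel (-h) ltac:(lra) ltac:(rewrite Rabs_left; lra)).
  rewrite Hs in H. apply Rabs_def2 in H.
  set (k := (p (s + - h) - 0) / - h) in H.
  assert (E : p (s - h) = k * (- h)) by (unfold k, Rminus; field; lra).
  rewrite E. assert (0 < k) by lra. nra.
Qed.

Lemma cross_core (p q q' : R -> R) (al be : R) :
  al < be ->
  (forall s, al <= s <= be -> continuity_pt p s) ->
  (forall s, al <= s <= be -> derivable_pt_lim q s (q' s)) ->
  (forall s, al <= s <= be -> p s > 0 -> 0 <= q' s) ->
  (forall s, al <= s <= be -> p s = 0 -> derivable_pt_lim p s (q s)) ->
  p al = 0 -> p be = 0 -> q al > 0 -> False.
Proof.
  intros Hab Hc Hq Hsg Hz Ha Hb Hqa.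
  destruct (deriv_pos_right p al (q al) (Hz al ltac:(lra) Ha) Hqa Ha) as [d [Hd Hr]].
  set (h0 := Rmin d (be - al) / 2).
  assert (Hh0 : 0 < h0 < d /\ h0 < be - al).
  { unfold h0; apply Rmin_case_strong; lra. }
  assert (Hpx : p (al + h0) > 0) by (apply Hr; lra).
  destruct (first_zero p (al + h0) be ltac:(lra)
              (fun s Hs => Hc s ltac:(lra)) Hpx ltac:(lra)) as [z [Hz1 [Hz2 Hz3]]].
  assert (Hpos : forall w, al < w < z -> p w > 0).
  { intros w Hw. destruct (Rle_or_lt w (al + h0)).
    - replace w with (al + (w - al)) by ring. apply Hr. lra.
    - apply Hz3. lra. }
  destruct (MVT_cor2 q q' al z ltac:(lra) (fun c Hc' => Hq c ltac:(lra))) as [c [Hc1 Hc2]].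
  assert (0 <= q' c) by (apply Hsg; [lra| apply Hpos; lra]).
  assert (Hqz : q z > 0) by nra.
  destruct (deriv_pos_left p z (q z) (Hz z ltac:(lra) Hz2) Hqz Hz2) as [d2 [Hd2 Hl]].
  set (h1 := Rmin d2 (z - al) / 2).
  assert (Hh1 : 0 < h1 < d2 /\ h1 < z - al).
  { unfold h1; apply Rmin_case_strong; lra. }
  assert (p (z - h1) < 0) by (apply Hl; lra).
  assert (p (z - h1) > 0) by (apply Hpos; lra). lra.
Qed.

Lemma cross_fwd (p q q' : R -> R) (al be : R) :
  al < be ->
  (forall s, al <= s <= be -> continuity_pt p s) ->
  (forall s, al <= s <= be -> derivable_pt_lim q s (q' s)) ->
  (forall s, al <= s <= be -> p s > 0 -> 0 <= q' s) ->
  (forall s, al <= s <= be -> p s < 0 -> q' s <= 0) ->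
  (forall s, al <= s <= be -> p s = 0 -> derivable_pt_lim p s (q s)) ->
  p al = 0 -> p be = 0 -> q al <> 0 -> False.
Proof.
  intros Hab Hc Hq Hs1 Hs2 Hz Ha Hb Hqa.
  destruct (Rtotal_order (q al) 0) as [Hn|[H0|Hp]]; [|contradiction|].
  - apply (cross_core (fun s => - p s) (fun s => - q s) (fun s => - q' s) al be Hab).
    + intros s Hs. apply (continuity_pt_opp p). auto.
    + intros s Hs. apply (derivable_pt_lim_opp q). auto.
    + intros s Hs H. assert (Hn2 : p s < 0) by lra. specialize (Hs2 s Hs Hn2). lra.
    + intros s Hs H. apply (derivable_pt_lim_opp p). apply Hz; auto. lra.
    + lra.
    + lra.
    + lra.
  - exact (cross_core p q q' al be Hab Hc Hq Hs1 Hz Ha Hb Hp).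
Qed.

Lemma deriv_refl (f : R -> R) (s l : R) :
  derivable_pt_lim f (- s) l -> derivable_pt_lim (fun x => f (- x)) s (- l).
Proof.
  intros H. apply is_derive_Reals. apply is_derive_Reals in H.
  replace (- l) with (scal (-1) l) by (unfold scal; simpl; unfold mult; simpl; ring).
  apply (is_derive_comp f Ropp). exact H.
  apply is_derive_Reals. replace (-1) with (- (1)) by ring.
  apply (derivable_pt_lim_opp id). apply derivable_pt_lim_id.
Qed.

Lemma cross_bwd (p q q' : R -> R) (al be : R) :
  al < be ->
  (forall s, al <= s <= be -> continuity_pt p s) ->
  (forall s, al <= s <= be -> derivable_pt_lim q s (q' s)) ->
  (forall s, al <= s <= be -> p s > 0 -> 0 <= q' s) ->
  (forall s, al <= s <= be -> p s < 0 -> q' s <= 0) ->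
  (forall s, al <= s <= be -> p s = 0 -> derivable_pt_lim p s (q s)) ->
  p al = 0 -> p be = 0 -> q be <> 0 -> False.
Proof.
  intros Hab Hc Hq Hs1 Hs2 Hz Ha Hb Hqb.
  apply (cross_fwd (fun s => p (- s)) (fun s => - q (- s)) (fun s => q' (- s)) (- be) (- al)).
  - lra.
  - intros s Hs. apply continuity_pt_comp with (f2 := p).
    apply continuity_pt_opp, continuity_pt_id. apply Hc; lra.
  - intros s Hs. replace (q' (- s)) with (- - q' (- s)) by ring.
    apply (deriv_refl (fun x => - q x)).
    apply (derivable_pt_lim_opp q). apply Hq; lra.
  - intros s Hs H. apply Hs1; auto; lra.
  - intros s Hs H. apply Hs2; auto; lra.
  - intros s Hs H. apply deriv_refl. apply Hz; auto; lra.
  - rewrite Ropp_involutive; auto.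
  - rewrite Ropp_involutive; auto.
  - rewrite Ropp_involutive; lra.
Qed.

Lemma gronwall0 (E E' : R -> R) (C lo hi t0 : R) :
  lo <= t0 <= hi ->
  (forall s, lo <= s <= hi -> derivable_pt_lim E s (E' s)) ->
  (forall s, lo <= s <= hi -> 0 <= E s) ->
  (forall s, lo <= s <= hi -> Rabs (E' s) <= C * E s) ->
  E t0 = 0 ->
  forall s, lo <= s <= hi -> E s = 0.
Proof.
  intros Ht HE Hpos Hb H0 s Hs.
  destruct (Rtotal_order s t0) as [Hlt|[Heq|Hgt]].
  - set (F := fun x => E x * exp (C * x)).
    set (F' := fun x => (E' x + C * E x) * exp (C * x)).
    destruct (MVT_cor2 F F' s t0 Hlt) as [c [Hc1 Hc2]].
    { intros c Hc. apply is_derive_Reals. unfold F, F'.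
      assert (HEc := HE c ltac:(lra)). apply is_derive_Reals in HEc.
      auto_derive; [eexists; exact HEc|].
      match goal with |- context [Derive ?f c] => replace (Derive f c) with (E' c) by (symmetry; apply is_derive_unique; exact HEc) end. ring. }
    assert (0 <= F' c).
    { unfold F'. apply Rmult_le_pos; [|apply Rlt_le, exp_pos].
      assert (HH := Hb c ltac:(lra)).
      pose proof (Rle_abs (- E' c)) as HR. rewrite Rabs_Ropp in HR. lra. }
    unfold F in Hc1; rewrite H0, Rmult_0_l in Hc1.
    assert (E s * exp (C * s) <= 0) by nra.
    pose proof (exp_pos (C * s)). pose proof (Hpos s Hs). nra.
  - subst; auto.
  - set (F := fun x => E x * exp (- C * x)).
    set (F' := fun x => (E' x - C * E x) * exp (- C * x)).
    destruct (MVT_cor2 F F' t0 s Hgt) as [c [Hc1 Hc2]].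
    { intros c Hc. apply is_derive_Reals. unfold F, F'.
      assert (HEc := HE c ltac:(lra)). apply is_derive_Reals in HEc.
      auto_derive; [eexists; exact HEc|].
      match goal with |- context [Derive ?f c] => replace (Derive f c) with (E' c) by (symmetry; apply is_derive_unique; exact HEc) end. ring. }
    assert (F' c <= 0).
    { unfold F'. assert (HH := Hb c ltac:(lra)).
      pose proof (Rle_abs (E' c)). pose proof (exp_pos (- C * c)). nra. }
    unfold F in Hc1; rewrite H0, Rmult_0_l in Hc1.
    assert (E s * exp (- C * s) <= 0) by nra.
    pose proof (exp_pos (- C * s)). pose proof (Hpos s Hs). nra.
Qed.

Definition Dint (delta : R -> R) (x : R) := RInt delta 1 x.

Lemma adm_cont delta : admissible_delta delta -> forall x, 0 < x -> continuous delta x.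
Proof. intros [_ [_ H]] x Hx. apply (ex_derive_continuous (K:=R_AbsRing) (V:=R_NormedModule)). apply H; auto. Qed.

Lemma Dint_deriv delta : admissible_delta delta ->
  forall x, 0 < x -> is_derive (Dint delta) x (delta x).
Proof.
  intros Had x Hx. apply is_derive_RInt with (a := 1).
  - assert (Hp : 0 < x / 2) by lra. exists (mkposreal _ Hp).
    intros y Hy. change (Rabs (y - x) < x / 2) in Hy. apply Rabs_def2 in Hy.
    apply RInt_correct. apply ex_RInt_continuous. intros z Hz.
    apply (adm_cont delta Had).
    assert (0 < Rmin 1 y) by (apply Rmin_glb_lt; lra). lra.
  - apply (adm_cont delta Had); auto.
Qed.

Lemma Dint_lip delta M : admissible_delta delta ->
  (forall x, 0 < x -> Rabs (delta x) <= M) ->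
  forall x y, 0 < x -> 0 < y -> Rabs (Dint delta x - Dint delta y) <= M * Rabs (x - y).
Proof.
  intros Had HM x y Hx Hy.
  assert (Hm : 0 < Rmin y x) by (apply Rmin_glb_lt; lra).
  destruct (MVT_gen (Dint delta) y x delta) as [c [Hc Heq]].
  - intros z Hz. apply Dint_deriv; auto. simpl in Hz. lra.
  - intros z Hz. simpl in Hz. apply continuity_pt_filterlim.
    apply (ex_derive_continuous (K:=R_AbsRing) (V:=R_NormedModule)). eexists. apply Dint_deriv; auto. lra.
  - simpl in Hc. rewrite Heq, Rabs_mult. apply Rmult_le_compat_r.
    apply Rabs_pos. apply HM. lra.
Qed.

Lemma inv_sq_lip m x y : 0 < m -> m <= x -> m <= y ->
  Rabs (/ y ^ 2 - / x ^ 2) <= 2 / m ^ 3 * Rabs (x - y).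
Proof.
  intros Hm Hx Hy.
  assert (E : / y ^ 2 - / x ^ 2 = (x - y) * (/ (x * y * y) + / (x * x * y))) by (field; lra).
  rewrite E, Rabs_mult, (Rmult_comm (2 / m ^ 3)). apply Rmult_le_compat_l. apply Rabs_pos.
  assert (H1 : / (x * y * y) <= / m ^ 3).
  { apply Rinv_le_contravar. apply pow_lt; lra.
    assert (m * m <= y * y) by nra. simpl. nra. }
  assert (H2 : / (x * x * y) <= / m ^ 3).
  { apply Rinv_le_contravar. apply pow_lt; lra.
    assert (m * m <= x * x) by nra. simpl. nra. }
  assert (0 < / (x * y * y)) by (apply Rinv_0_lt_compat; apply Rmult_lt_0_compat; nra).
  assert (0 < / (x * x * y)) by (apply Rinv_0_lt_compat; apply Rmult_lt_0_compat; nra).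
  rewrite Rabs_right by lra. unfold Rdiv. lra.
Qed.

Lemma u_deriv delta a b r s : admissible_delta delta -> is_solution delta a b r ->
  in_open_interval a b s ->
  is_derive (fun s => Derive r s + Dint delta (r s)) s (- / (r s ^ 2)).
Proof.
  intros Had Hs Hi. destruct (Hs s Hi) as [Hpos [Hd1 [Hd2 Heq]]].
  rewrite <- Heq. apply (is_derive_plus (K:=R_AbsRing) (V:=R_NormedModule) (Derive r) (fun s => Dint delta (r s))). apply Derive_correct; auto.
  replace (delta (r s) * Derive r s) with (scal (Derive r s) (delta (r s)))
    by (unfold scal; simpl; unfold mult; simpl; ring).
  apply (is_derive_comp (Dint delta) r). apply Dint_deriv; auto.
  apply Derive_correct; auto.
Qed.

Lemma sq_deriv (p q : R -> R) c dp dq : is_derive p c dp -> is_derive q c dq ->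
  is_derive (fun s => p s ^ 2 + q s ^ 2) c (2 * p c * dp + 2 * q c * dq).
Proof.
  intros Hp Hq. auto_derive. split; [eexists; exact Hp|split; [eexists; exact Hq|exact I]].
  match goal with |- context [Derive ?f c] => replace (Derive f c) with dp by (symmetry; apply is_derive_unique; exact Hp) end.
  match goal with |- context [Derive ?f c] => replace (Derive f c) with dq by (symmetry; apply is_derive_unique; exact Hq) end.
  ring.
Qed.

Lemma interval_between a b x y s : in_open_interval a b x -> in_open_interval a b y ->
  Rmin x y <= s <= Rmax x y -> in_open_interval a b s.
Proof.
  unfold in_open_interval. intros [Hx1 Hx2] [Hy1 Hy2] Hs.
  revert Hs; apply Rmin_case_strong; intros; revert Hs; apply Rmax_case_strong; intros;
  destruct a, b; simpl in *; try tauto; split; try exact I; lra.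
Qed.

Lemma dl_cont f x l : derivable_pt_lim f x l -> continuity_pt f x.
Proof. intros H. apply derivable_continuous_pt. exists l. exact H. Qed.

Theorem lemma3p1 (delta : R -> R) (a b : Rbar) (r1 r2 : R -> R) (tstar : R) :
  admissible_delta delta ->
  Rbar_lt a b ->
  is_solution delta a b r1 ->
  is_solution delta a b r2 ->
  (exists t, in_open_interval a b t /\ r1 t <> r2 t) ->
  in_open_interval a b tstar ->
  r1 tstar = r2 tstar ->
  forall t, in_open_interval a b t -> t <> tstar -> r1 t <> r2 t.
Proof.
  intros Had Hab Hs1 Hs2 [t0 [Ht0 Hne0]] Htstar Heq t Ht Hnt Hrt.
  assert (HM := Had). destruct HM as [_ [[M HM] _]].
  assert (HM0 : 0 <= M) by (pose proof (HM 1 ltac:(lra)); pose proof (Rabs_pos (delta 1)); lra).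
  set (p := fun s => r1 s - r2 s).
  set (q := fun s => (Derive r1 s + Dint delta (r1 s)) - (Derive r2 s + Dint delta (r2 s))).
  set (q' := fun s => - / (r1 s ^ 2) - - / (r2 s ^ 2)).
  set (p' := fun s => Derive r1 s - Derive r2 s).
  assert (Fp : forall s, in_open_interval a b s -> derivable_pt_lim p s (p' s)).
  { intros s Hi. apply is_derive_Reals. unfold p, p'.
    destruct (Hs1 s Hi) as [_ [H1 _]]. destruct (Hs2 s Hi) as [_ [H2 _]].
    apply (is_derive_minus (K:=R_AbsRing) (V:=R_NormedModule) r1 r2);
      apply Derive_correct; auto. }
  assert (Fq : forall s, in_open_interval a b s -> derivable_pt_lim q s (q' s)).
  { intros s Hi. apply is_derive_Reals. unfold q, q'.
    apply (is_derive_minus (K:=R_AbsRing) (V:=R_NormedModule)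
      (fun s => Derive r1 s + Dint delta (r1 s)) (fun s => Derive r2 s + Dint delta (r2 s)));
      eapply u_deriv; eauto. }
  assert (Fc : forall s, in_open_interval a b s -> continuity_pt p s).
  { intros s Hi. eapply dl_cont. apply Fp; auto. }
  assert (Fpq : forall s, p' s = q s - (Dint delta (r1 s) - Dint delta (r2 s))).
  { intros s. unfold p', q. ring. }
  assert (Fz : forall s, in_open_interval a b s -> p s = 0 -> derivable_pt_lim p s (q s)).
  { intros s Hi Hz. replace (q s) with (p' s). apply Fp; auto.
    rewrite Fpq. unfold p in Hz. replace (r1 s) with (r2 s) by lra. ring. }
  assert (S1 : forall s, in_open_interval a b s -> p s > 0 -> 0 <= q' s).
  { intros s Hi Hp. destruct (Hs1 s Hi) as [P1 _]. destruct (Hs2 s Hi) as [P2 _].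
    unfold p in Hp. unfold q'.
    assert (/ (r1 s ^ 2) <= / (r2 s ^ 2)).
    { apply Rinv_le_contravar. apply pow_lt; lra. simpl. nra. }
    lra. }
  assert (S2 : forall s, in_open_interval a b s -> p s < 0 -> q' s <= 0).
  { intros s Hi Hp. destruct (Hs1 s Hi) as [P1 _]. destruct (Hs2 s Hi) as [P2 _].
    unfold p in Hp. unfold q'.
    assert (/ (r2 s ^ 2) <= / (r1 s ^ 2)).
    { apply Rinv_le_contravar. apply pow_lt; lra. simpl. nra. }
    lra. }
  destruct (Req_dec (q tstar) 0) as [Hq0|Hq0].
  -
    apply Hne0.
    set (lo := Rmin tstar t0). set (hi := Rmax tstar t0).
    assert (Hlh : lo <= hi) by (unfold lo, hi; apply Rmin_case_strong; apply Rmax_case_strong; lra).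
    assert (Hin : forall s, lo <= s <= hi -> in_open_interval a b s).
    { intros s Hs. eapply interval_between; [exact Htstar|exact Ht0|exact Hs]. }
    destruct (continuity_ab_min r1 lo hi Hlh) as [m1 [Hm1 Hm1i]].
    { intros c Hc. destruct (Hs1 c (Hin c Hc)) as [_ [Hd _]].
      apply continuity_pt_filterlim.
      apply (ex_derive_continuous (K:=R_AbsRing) (V:=R_NormedModule)). auto. }
    destruct (continuity_ab_min r2 lo hi Hlh) as [m2 [Hm2 Hm2i]].
    { intros c Hc. destruct (Hs2 c (Hin c Hc)) as [_ [Hd _]].
      apply continuity_pt_filterlim.
      apply (ex_derive_continuous (K:=R_AbsRing) (V:=R_NormedModule)). auto. }
    set (m := Rmin (r1 m1) (r2 m2)).
    assert (Hm : 0 < m).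
    { destruct (Hs1 m1 (Hin m1 Hm1i)) as [P1 _]. destruct (Hs2 m2 (Hin m2 Hm2i)) as [P2 _].
      unfold m; apply Rmin_case_strong; lra. }
    assert (Hr1m : forall s, lo <= s <= hi -> m <= r1 s).
    { intros s Hs. pose proof (Hm1 s Hs). pose proof (Rmin_l (r1 m1) (r2 m2)). unfold m; lra. }
    assert (Hr2m : forall s, lo <= s <= hi -> m <= r2 s).
    { intros s Hs. pose proof (Hm2 s Hs). pose proof (Rmin_r (r1 m1) (r2 m2)). unfold m; lra. }
    set (K := 2 / m ^ 3).
    assert (HK : 0 <= K).
    { unfold K. apply Rlt_le. apply Rdiv_lt_0_compat. lra. apply pow_lt; lra. }
    set (E := fun s => p s ^ 2 + q s ^ 2).
    set (E' := fun s => 2 * p s * p' s + 2 * q s * q' s).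
    assert (HE0 : E tstar = 0).
    { unfold E. rewrite Hq0. unfold p. rewrite Heq. ring. }
    assert (Hzero := gronwall0 E E' (1 + K + 2 * M) lo hi tstar).
    assert (Ht0i : lo <= t0 <= hi).
    { unfold lo, hi; split; [apply Rmin_r|apply Rmax_r]. }
    assert (HEt0 : E t0 = 0).
    { apply Hzero; auto.
      - unfold lo, hi; split; [apply Rmin_l|apply Rmax_l].
      - intros s Hs. apply is_derive_Reals. unfold E, E'.
        apply sq_deriv; apply is_derive_Reals; [apply Fp|apply Fq]; auto.
      - intros s Hs. unfold E. nra.
      - intros s Hs. unfold E, E'.
        assert (Hi := Hin s Hs).
        destruct (Hs1 s Hi) as [P1 _]. destruct (Hs2 s Hi) as [P2 _].
        assert (A1 : Rabs (p' s) <= Rabs (q s) + M * Rabs (p s)).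
        { rewrite Fpq. unfold p.
          pose proof (Dint_lip delta M Had HM (r1 s) (r2 s) P1 P2).
          pose proof (Rabs_triang (q s) (- (Dint delta (r1 s) - Dint delta (r2 s)))).
          rewrite Rabs_Ropp in H0. unfold Rminus at 1. lra. }
        assert (A2 : Rabs (q' s) <= K * Rabs (p s)).
        { unfold q', K, p.
          replace (- / r1 s ^ 2 - - / r2 s ^ 2) with (/ r2 s ^ 2 - / r1 s ^ 2) by ring.
          apply inv_sq_lip; auto. }
        assert (A3 : Rabs (2 * p s * p' s + 2 * q s * q' s)
                     <= 2 * Rabs (p s) * Rabs (p' s) + 2 * Rabs (q s) * Rabs (q' s)).
        { eapply Rle_trans. apply Rabs_triang.
          rewrite !Rabs_mult. rewrite (Rabs_right 2) by lra. lra. }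
        rewrite <- (pow2_abs (p s)), <- (pow2_abs (q s)).
        set (P := Rabs (p s)) in *. set (Q := Rabs (q s)) in *.
        assert (0 <= P) by apply Rabs_pos. assert (0 <= Q) by apply Rabs_pos.
        assert (B1 : P * Rabs (p' s) <= P * (Q + M * P)) by (apply Rmult_le_compat_l; auto).
        assert (B2 : Q * Rabs (q' s) <= Q * (K * P)) by (apply Rmult_le_compat_l; auto).
        assert (B3 : 2 * P * Q <= P ^ 2 + Q ^ 2) by (pose proof (Rle_0_sqr (P - Q)); unfold Rsqr in *; simpl; nra).
        assert (B4 : 0 <= K * (P - Q) ^ 2) by (apply Rmult_le_pos; auto; apply pow2_ge_0).
        nra. }
    unfold E in HEt0. unfold p in HEt0.
    nra.
  - destruct (Rtotal_order t tstar) as [Hlt|[Heq'|Hgt]]; [|contradiction|].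
    + apply (cross_bwd p q q' t tstar Hlt).
      all: try (intros s Hs; assert (Hi : in_open_interval a b s)
               by (eapply interval_between; [exact Ht|exact Htstar|];
                   rewrite Rmin_left, Rmax_right; lra)).
      all: auto.
      unfold p; lra. unfold p; lra.
    + apply (cross_fwd p q q' tstar t Hgt).
      all: try (intros s Hs; assert (Hi : in_open_interval a b s)
               by (eapply interval_between; [exact Htstar|exact Ht|];
                   rewrite Rmin_left, Rmax_right; lra)).
      all: auto.
      unfold p; lra. unfold p; lra.
Qed.
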